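(* Let $w:\{0,1\}^L\to\mathbb{R}_{\ge 0}$ be a generic fitness landscape inducing the standard staircase triangulation, and let $g,g'$ be genotypes with $g'\subset g$. For every pair of genotypes $\{h,h'\}$ with $X_{h,h'}=X_{g,g'}$ we have $w_g+w_{g'}\ge w_h+w_{h'}$, with equality only if $\{h,h'\}=\{g,g'\}$.
   Context: Genotypes $g\in\{0,1\}^L$ are identified with subsets $\{i:g_i=1\}$ of $\{1,\dots,L\}$ and with vertices of $[0,1]^L$. For genotypes $g,g'$, $X_{g,g'}\in[0,1]^L$ is defined by $X_{g,g'}(i)=\tfrac12(g_i+g'_i)$. The triangulation induced by $w$ is the regular subdivision of $[0,1]^L$ obtained by projecting the upper faces of $\mathrm{conv}\{(g,w_g)\}\subset\mathbb{R}^{L+1}$; $w$ is generic if all $w_g$ are distinct and this subdivision is a triangulation. The standard staircase triangulation consists of the $L!$ simplices $\{g_0\subset g_1\subset\cdots\subset g_L\}$ with $g_0=\emptyset$, $g_L=\{1,\dots,L\}$, $|g_k|=k$. *)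

(* Defs.v *)
From mathcomp Require Import all_boot all_order all_algebra all_fingroup.
Set Implicit Arguments. Unset Strict Implicit. Unset Printing Implicit Defensive.
Import Order.TTheory GRing.Theory Num.Theory.
Local Open Scope ring_scope.

(* Genotypes on L loci are subsets of 'I_L (the set of loci i with g_i = 1),
   i.e. vertices of the cube [0,1]^L.  A fitness landscape is w : {set 'I_L} -> R. *)

Section Defs.
Variables (R : realFieldType) (L : nat).

Definition coord (g : {set 'I_L}) (i : 'I_L) : R := (i \in g)%:R.

Definition Xmid (g g' : {set 'I_L}) : {ffun 'I_L -> R} :=
  [ffun i => (coord g i + coord g' i) / 2%:R].

Definition affval (a : 'I_L -> R) (b : R) (g : {set 'I_L}) : R :=
  \sum_(i < L) a i * coord g i + b.

(* S is the vertex set of a (projected) upper face of conv{(g, w_g)}: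
   there is a non-vertical supporting hyperplane (graph of an affine function)
   lying weakly above all lifted points and touching exactly those in S. *)
Definition upper_face (w : {set 'I_L} -> R) (S : {set {set 'I_L}}) : Prop :=
  exists (a : 'I_L -> R) (b : R),
    (forall g, w g <= affval a b g) /\ (forall g, g \in S <-> affval a b g = w g).

(* S affinely spans R^L: the only affine function vanishing on S is zero. *)
Definition full_dim (S : {set {set 'I_L}}) : Prop :=
  forall (a : 'I_L -> R) (b : R),
    (forall g, g \in S -> affval a b g = 0) -> (forall i, a i = 0) /\ b = 0.

Definition max_cell (w : {set 'I_L} -> R) (S : {set {set 'I_L}}) : Prop :=
  upper_face w S /\ full_dim S.

(* w is generic: all w_g distinct and the induced subdivision is a
   triangulation (every maximal cell is a simplex, i.e. has L+1 vertices). *)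
Definition generic (w : {set 'I_L} -> R) : Prop :=
  injective w /\ (forall S, max_cell w S -> #|S| = L.+1).

(* simplices of the standard staircase triangulation:
   {g_0 ⊂ g_1 ⊂ ... ⊂ g_L}, g_k = {s 0, ..., s (k-1)} for a permutation s *)
Definition staircase_simplex (S : {set {set 'I_L}}) : Prop :=
  exists s : 'S_L, S = [set [set s j | j : 'I_L & (j < k)%N] | k : 'I_L.+1].

Definition induces_staircase (w : {set 'I_L} -> R) : Prop :=
  forall S, max_cell w S <-> staircase_simplex S.

End Defs.

(* Main.v *)
Require Import Defs.
From mathcomp Require Import all_boot all_order all_algebra all_fingroup.
Import Order.TTheory GRing.Theory Num.Theory.
Local Open Scope ring_scope.
Section Aux.
Variables (L : nat) (t : seq 'I_L).
Hypotheses (Ut : uniq t) (St : size t = L) (Tall : forall x, x \in t).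

Definition tf (j : 'I_L) : 'I_L := nth j t j.

Lemma tf_inj : injective tf.
Proof.
move=> j1 j2; rewrite /tf (set_nth_default j1 j2); last by rewrite St.
move/eqP; rewrite nth_uniq ?St ?ltn_ord //.
by move=> /eqP; apply: val_inj.
Qed.

Definition tperm := perm tf_inj.

Lemma mem_tstair (k : nat) x :
  (x \in [set tperm j | j : 'I_L & (j < k)%N]) = (index x t < k)%N.
Proof.
apply/imsetP/idP.
  move=> [j]; rewrite inE => Hj ->; rewrite /tperm permE /tf index_uniq //.
  by rewrite St.
move=> H.
have HL : (index x t < L)%N by rewrite -[X in (_ < X)%N]St index_mem.
exists (Ordinal HL); first by rewrite inE.
by rewrite /tperm permE /tf /= nth_index.
Qed.

End Aux.

Lemma B1 (R : realFieldType) (x y : R) : x / 2%:R = y / 2%:R -> x = y.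
Proof.
have two : (2%:R : R) != 0 by rewrite pnatr_eq0.
move/(congr1 (fun x => x * 2%:R)); rewrite !divfK //.
Qed.
Lemma B2 (R : realFieldType) (m n : nat) : m%:R = n%:R :> R -> m = n.
Proof. by move/eqP; rewrite eqr_nat => /eqP. Qed.
Lemma coord_sum (R : realFieldType) (L : nat) (h h' g g' : {set 'I_L}) :
  Xmid R h h' = Xmid R g g' -> forall i,
  ((i \in h) + (i \in h') = (i \in g) + (i \in g'))%N.
Proof.
move=> E i; have := congr1 (fun f : {ffun 'I_L -> R} => f i) E.
rewrite /= !ffunE -!natrD => /B1 /B2. done.
Qed.
Lemma affval_sum (R : realFieldType) (L : nat) (h h' g g' : {set 'I_L}) (a : 'I_L -> R) (b : R) :
  Xmid R h h' = Xmid R g g' ->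
  affval a b h + affval a b h' = affval a b g + affval a b g'.
Proof.
move=> E; rewrite /affval.
have H : \sum_(i < L) a i * Defs.coord R h i + \sum_(i < L) a i * Defs.coord R h' i =
         \sum_(i < L) a i * Defs.coord R g i + \sum_(i < L) a i * Defs.coord R g' i.
  rewrite -!big_split /=; apply: eq_bigr => i _.
  by rewrite -!mulrDr -!natrD (@coord_sum R L _ _ _ _ E i).
move: H; set x1 := \sum_(i < L) _; set x2 := \sum_(i < L) _;
  set x3 := \sum_(i < L) _; set x4 := \sum_(i < L) _.
move=> H; by rewrite addrACA H addrACA.
Qed.

Lemma bf1 (a b c d : bool) : (d -> c) -> (a -> b) -> (a + b = c + d)%N -> a = d /\ b = c.
Proof. by case: a; case: b; case: c; case: d => //= H1 H2; try by [move: (H1 isT)|move: (H2 isT)]. Qed.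
Lemma bf2 (a b c d : bool) : (d -> c) -> (b -> a) -> (a + b = c + d)%N -> a = c /\ b = d.
Proof. by case: a; case: b; case: c; case: d => //= H1 H2; try by [move: (H1 isT)|move: (H2 isT)]. Qed.

Theorem mainTheorem9 (R : realFieldType) (L : nat) (w : {set 'I_L} -> R)
    (w_ge0 : forall g, 0 <= w g)
    (w_gen : generic w) (w_stair : induces_staircase w)
    (g g' : {set 'I_L}) (sub_g'g : g' \subset g) :
  forall h h' : {set 'I_L}, Xmid R h h' = Xmid R g g' ->
    w h + w h' <= w g + w g' /\
    (w g + w g' = w h + w h' -> (h = g /\ h' = g') \/ (h = g' /\ h' = g)).
Proof.
move=> h h' E.
pose t := enum g' ++ enum (g :\: g') ++ enum (~: g).
have Tall : forall x, x \in t.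
  move=> x; rewrite !mem_cat !mem_enum !inE.
  by case: (x \in g); case: (x \in g'); rewrite ?orbT.
have Ut : uniq t.
  rewrite !cat_uniq !enum_uniq /= andbT; apply/andP; split.
    apply/hasPn => x; rewrite !mem_cat !mem_enum !inE.
    move=> H; apply/negP => xg'; move: H; by rewrite xg' (subsetP sub_g'g x xg').
  apply/hasPn => x; rewrite !mem_enum !inE => /negbTE xg; by rewrite xg andbF.
have St : size t = L.
  by rewrite -(card_uniqP Ut) -[RHS]card_ord; apply: eq_card => x; rewrite Tall.
pose s := @tperm _ _ Ut St.
pose F := fun k : 'I_L.+1 => [set s j | j : 'I_L & (j < k)%N].
pose S := [set F k | k : 'I_L.+1].
have [a [b [Hge Hiff]]] : upper_face w S.
  have : max_cell w S by apply/w_stair; exists s.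
  by case.
have memF : forall (k : nat) (u : seq 'I_L) (G : {set 'I_L}), (k <= L)%N ->
    take k t = u -> (forall x, (x \in G) = (x \in u)) -> G \in S.
  move=> k u G kL Hu; subst u => HG; apply/imsetP; exists (inord k) => //.
  apply/setP => x; apply: (etrans (HG x)); rewrite (in_take _ (Tall x)) (mem_tstair L t Ut St Tall); congr (_ < _)%N; symmetry; exact: (@inordK L k).
have gS : g \in S.
  apply: (memF (size (enum g' ++ enum (g :\: g'))) (enum g' ++ enum (g :\: g'))).
  - by rewrite -[X in (_ <= X)%N]St /t catA [X in (_ <= X)%N]size_cat leq_addr.
  - by rewrite /t catA take_size_cat.
  move=> x; rewrite mem_cat !mem_enum !inE.
  case Hx: (x \in g') => //=.
  by rewrite (subsetP sub_g'g x Hx).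
have g'S : g' \in S.
  apply: (memF (size (enum g')) (enum g')).
  - by rewrite -[X in (_ <= X)%N]St /t size_cat leq_addr.
  - by rewrite /t take_size_cat.
  by move=> x; rewrite mem_enum.
have Hs := @affval_sum R L _ _ _ _ a b E.
have ewg := proj1 (Hiff g) gS.
have ewg' := proj1 (Hiff g') g'S.
have Hh := Hge h; have Hh' := Hge h'.
split.
  rewrite -ewg -ewg' -Hs; exact: lerD.
move=> Heq.
have eh : affval a b h = w h.
  apply/eqP; rewrite eq_le Hh andbT.
  have : affval a b h + affval a b h' <= w h + w h'.
    by rewrite Hs ewg ewg' Heq.
  move=> H1; rewrite -(lerD2r (affval a b h')).
  apply: (le_trans H1); by rewrite lerD2l.
have eh' : affval a b h' = w h'.
  by apply: (addrI (w h)); rewrite -{1}eh Hs ewg ewg' Heq.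
have hS := proj2 (Hiff h) eh.
have h'S := proj2 (Hiff h') eh'.
have CS := @coord_sum R L _ _ _ _ E.
have comp : forall u v, u \in S -> v \in S -> u \subset v \/ v \subset u.
  move=> u v /imsetP [k1 _ ->] /imsetP [k2 _ ->].
  have [le12|le21] := leqP k1 k2.
    left; apply/subsetP => x; rewrite !(mem_tstair L t Ut St Tall) => H.
    exact: leq_trans H le12.
  right; apply/subsetP => x; rewrite !(mem_tstair L t Ut St Tall) => H.
  exact: ltn_trans H le21.
have gg' := subsetP sub_g'g.
case: (comp h h' hS h'S) => /subsetP sub; [right|left]; split; apply/setP => x.
- by have [H1 H2] := @bf1 _ _ _ _ (gg' x) (sub x) (CS x); exact: H1.
- by have [H1 H2] := @bf1 _ _ _ _ (gg' x) (sub x) (CS x); exact: H2.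
- by have [H1 H2] := @bf2 _ _ _ _ (gg' x) (sub x) (CS x); exact: H1.
- by have [H1 H2] := @bf2 _ _ _ _ (gg' x) (sub x) (CS x); exact: H2.
Qed.
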